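(* Let $d\ge 2$ be an integer with $d\ne 3$, let $w=(-1,1,\dots,1)^\intercal\in\mathbb R^{d+2}$, and let $\mathbf U=\mathbf U_n\cdots\mathbf U_2\mathbf U_1$ be a word with letters in $\{\mathbf R_1,\dots,\mathbf R_{d+2}\}$ (evaluated as a matrix product) such that $\mathbf U_1=\mathbf R_1$ and no two consecutive letters are equal. Then for every $1\le i\le d+2$ such that the letter $\mathbf R_i$ occurs in $\mathbf U$, we have $\sigma_i^w(\mathbf U)\ne 1$.
   Context: Let $\mathbf e\in\mathbb R^{d+2}$ be the all-ones vector, $\mathbf e_i$ the $i$-th standard basis vector and $\mathbf I$ the $(d+2)\times(d+2)$ identity. For $1\le i\le d+2$, $\mathbf R_i=\mathbf I+\frac{2}{d-1}\mathbf e_i\mathbf e^\intercal-\frac{2d}{d-1}\mathbf e_i\mathbf e_i^\intercal$ (equal to $\mathbf I$ except that row $i$ has diagonal entry $-1$ and off-diagonal entries $2/(d-1)$). For a matrix $\mathbf U$, $\sigma_i^w(\mathbf U)=\mathbf e_i^\intercal\mathbf U w$ is the $w$-weighted sum of the $i$-th row. *)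

(* Defs.v *)
From HB Require Import structures.
From mathcomp Require Import all_boot all_order all_algebra.
Set Implicit Arguments. Unset Strict Implicit. Unset Printing Implicit Defensive.
Import Order.TTheory GRing.Theory Num.Theory.
Local Open Scope ring_scope.

(* Indices 1..d+2 of the paper are the ordinals 0..d+1 of 'I_(d.+2). *)

Definition onesv (R : realFieldType) (n : nat) : 'cV[R]_n := const_mx 1.

Definition basisv (R : realFieldType) (n : nat) (i : 'I_n) : 'cV[R]_n :=
  \col_j (j == i)%:R.

Definition Rmat (R : realFieldType) (d : nat) (i : 'I_(d.+2)) : 'M[R]_(d.+2) :=
  1%:M + (2 / (d%:R - 1)) *: (basisv R i *m (onesv R d.+2)^T)
       - (2 * d%:R / (d%:R - 1)) *: (basisv R i *m (basisv R i)^T).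

Definition wvec (R : realFieldType) (d : nat) : 'cV[R]_(d.+2) :=
  \col_j (if j == ord0 then -1 else 1).

Definition sigmaw (R : realFieldType) (n : nat) (w : 'cV[R]_n) (i : 'I_n)
  (U : 'M[R]_n) : R :=
  ((basisv R i)^T *m U *m w) 0 0.

(* A word [:: i_1; ...; i_n] evaluates to R_{i_n} * ... * R_{i_1}. *)
Definition wordmx (R : realFieldType) (d : nat) (s : seq 'I_(d.+2)) : 'M[R]_(d.+2) :=
  foldl (fun M i => Rmat R i *m M) 1%:M s.

(* Main.v *)
Require Import Defs.
From HB Require Import structures.
From mathcomp Require Import all_boot all_order all_algebra.
From mathcomp Require Import ring lra zify.
Import Order.TTheory GRing.Theory Num.Theory.
Local Open Scope ring_scope.

Lemma dvdzt (p : int) (a b : int) : (p %| a)%Z -> (p %| b)%Z -> (p %| a + b)%Z.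
Proof. move=> ha hb. exact: rpredD. Qed.

Section S.
Variables (R : realFieldType) (d : nat).
Hypothesis hd : (2 <= d)%N.

Lemma dm1 : (d%:R - 1 : R) != 0.
Proof.
rewrite subr_eq0 pnatr_eq1; apply/eqP => h; move: hd; by rewrite h.
Qed.

Lemma Rmat_entry (v : 'cV[R]_(d.+2)) (i j : 'I_(d.+2)) :
  (Rmat R i *m v) j 0 = if j == i then
     (2 / (d%:R - 1)) * (\sum_k v k 0) - ((d%:R + 1) / (d%:R - 1)) * v i 0
   else v j 0.
Proof.
have E1 : (onesv R d.+2)^T *m v = (\sum_k v k 0)%:M.
  apply/matrixP => a b; rewrite !ord1 !mxE; apply: eq_bigr => k _; by rewrite !mxE mul1r.
have E2 : (basisv R i)^T *m v = (v i 0)%:M.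
  apply/matrixP => a b; rewrite !ord1 !mxE (bigD1 i) //= big1 ?addr0.
    by rewrite !mxE eqxx mul1r.
  by move=> k hk; rewrite !mxE (negbTE hk) mul0r.
rewrite /Rmat mulmxBl mulmxDl mul1mx -!scalemxAl -!mulmxA E1 E2 !mxE !big_ord1 !mxE /= !mulr1n.
case: eqP => [->|_]; last by rewrite !mul0r !mulr0 subr0 addr0.
rewrite !mul1r. have := dm1. move=> h. by field; rewrite ?h.
Qed.

Definition g (v : 'cV[R]_(d.+2)) (i : 'I_(d.+2)) := Rmat R i *m v.

Lemma foldl_mul (t : seq 'I_(d.+2)) (M : 'M[R]_(d.+2)) (w : 'cV[R]_(d.+2)) :
  foldl (fun M i => Rmat R i *m M) M t *m w = foldl g (M *m w) t.
Proof. elim: t M => [|x t IH] M //=. by rewrite IH /g mulmxA. Qed.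

Lemma sigmawE (w : 'cV[R]_(d.+2)) i U : sigmaw w i U = (U *m w) i 0.
Proof.
rewrite /sigmaw -mulmxA mxE (bigD1 i) //= big1 ?addr0.
  by rewrite !mxE eqxx mul1r.
by move=> k hk; rewrite !mxE (negbTE hk) mul0r.
Qed.

Lemma gen (P : 'cV[R]_(d.+2) -> 'I_(d.+2) -> Prop)
  (Pstep : forall v l i, P v l -> i != l -> P (Rmat R i *m v) i)
  (Pne : forall v l, P v l -> v l 0 != 1) :
  forall t v l, path (fun a b : 'I_(d.+2) => a != b) l t -> P v l ->
  forall j, (j \in l :: t) || (v j 0 != 1) -> (foldl g v t) j 0 != 1.
Proof.
elim=> [|i t IH] v l /=.
  move=> _ hP j; rewrite mem_seq1; case/orP => [/eqP -> |//]; exact: Pne hP.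
case/andP=> hli hp hP j hj.
apply: (IH _ i hp (Pstep _ _ _ hP _)); first by rewrite eq_sym.
case: (eqVneq j i) => [->|hji]; first by rewrite mem_head.
rewrite /g Rmat_entry (negbTE hji).
move: hj; rewrite !inE (negbTE hji) /=.
case: (boolP (j == l)) => [/eqP E|_] /=; first by rewrite E (Pne _ _ hP) orbT.
by move=> ->.
Qed.

Lemma sum_w : \sum_k (wvec R d) k 0 = d%:R.
Proof.
rewrite big_ord_recl !mxE eqxx.
rewrite (eq_bigr (fun _ => 1)); last by move=> k _; rewrite !mxE.
rewrite sumr_const card_ord -natr1 /=. ring.
Qed.

Definition v1 := Rmat R ord0 *m wvec R d.

Lemma v1_0 : v1 ord0 0 = (3 * d%:R + 1) / (d%:R - 1).
Proof. rewrite /v1 Rmat_entry eqxx sum_w !mxE eqxx. have := dm1 => h. by field; rewrite ?h. Qed.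

Lemma v1_j j : j != ord0 -> v1 j 0 = 1.
Proof. move=> hj. by rewrite /v1 Rmat_entry (negbTE hj) mxE (negbTE hj). Qed.

Section Int.
Variables (p q : nat) (a b : int).
Hypotheses (hp : prime p) (hpq : (p %| q)%N) (hq : (0 < q)%N)
  (ha : ~~ (p%:Z %| a)%Z)
  (hc1 : 2 / (d%:R - 1) = a%:~R / q%:R :> R)
  (hc2 : (d%:R + 1) / (d%:R - 1) = b%:~R / q%:R :> R).

Definition Inv (v : 'cV[R]_(d.+2)) (l : 'I_(d.+2)) :=
  exists (N : nat) (u : 'I_(d.+2) -> int), (p %| N)%N /\ (0 < N)%N /\
   (forall j, v j 0 = (u j)%:~R / N%:R) /\ ~~ (p%:Z %| u l)%Z /\
   (forall j, j != l -> (p%:Z %| u j)%Z).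

Lemma Inv_step v l i : Inv v l -> i != l -> Inv (Rmat R i *m v) i.
Proof.
move=> [N [u [hpN [hN [hv [hul hu]]]]]] hil.
have hq' : q%:R != 0 :> R by rewrite pnatr_eq0 -lt0n.
have hN' : N%:R != 0 :> R by rewrite pnatr_eq0 -lt0n.
exists (q * N)%N, (fun j => if j == i then a * (\sum_k u k) - b * u i else q%:Z * u j).
split; first exact: dvdn_mulr.
split; first by rewrite muln_gt0 hq hN.
split.
  move=> j; rewrite Rmat_entry; case: (boolP (j == i)) => [_|hji].
    rewrite hc1 hc2 (eq_bigr _ (fun k _ => hv k)) hv -mulr_suml rmorphB !rmorphM /= rmorph_sum.
    field. by rewrite hq' hN'.
  rewrite hv rmorphM natrM /=. field. by rewrite hq' hN'.
split.
  rewrite eqxx; apply/negP => H.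
  have hs : (p%:Z %| \sum_(k | k != l) u k)%Z by apply: rpred_sum => k hk; exact: hu.
  have hbi : (p%:Z %| b * u i)%Z by apply: dvdz_mull; exact: hu.
  have hal : (p%:Z %| a * u l)%Z.
    have -> : a * u l = (a * (\sum_k u k) - b * u i) - a * (\sum_(k | k != l) u k) + b * u i.
      rewrite (bigD1 l) //=. ring.
    apply: rpredD => //; apply: rpredB => //; exact: dvdz_mull.
  move: hal; rewrite dvdzE abszM absz_nat Euclid_dvdM //.
  by move: ha hul; rewrite !dvdzE absz_nat => /negbTE -> /negbTE ->.
move=> j hj; rewrite (negbTE hj). rewrite dvdzE abszM !absz_nat. exact: dvdn_mulr.
Qed.

Lemma Inv_ne v l : Inv v l -> v l 0 != 1.
Proof.
move=> [N [u [hpN [hN [hv [hul hu]]]]]].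
have hN' : N%:R != 0 :> R by rewrite pnatr_eq0 -lt0n.
rewrite hv; apply/negP => /eqP H.
have : (u l)%:~R = (N%:Z)%:~R :> R.
  by rewrite -(divfK hN' ((u l)%:~R)) H mul1r.
move/intr_inj => E. move: hul; by rewrite E dvdzE !absz_nat hpN.
Qed.
End Int.

Definition P2 (v : 'cV[R]_(d.+2)) (l : 'I_(d.+2)) :=
  (forall j, 1 <= v j 0) /\ (forall j, v j 0 <= v l 0) /\ 1 < v l 0.

Lemma P2_step (d2 : d = 2%N) v l i : P2 v l -> i != l -> P2 (Rmat R i *m v) i.
Proof.
move=> [h1 [h2 h3]] hil.
set rest := \sum_(k | (k != l) && (k != i)) v k 0.
have hr : 0 <= rest by apply: sumr_ge0 => k _; have := h1 k; lra.
have hx : (Rmat R i *m v) i 0 = 2 * (v i 0 + v l 0 + rest) - 3 * v i 0.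
  have Ed : (d%:R : R) = 2 by rewrite d2.
  rewrite Rmat_entry eqxx (bigD1 l) //= (bigD1 i) //= Ed /rest.
  have E : (2 : R) - 1 = 1 by rewrite -natr1 addrK.
  rewrite E !divr1. ring.
have hil' := hil.
have hx1 : v l 0 <= (Rmat R i *m v) i 0 by rewrite hx; have := h2 i; lra.
split.
  move=> j; case: (boolP (j == i)) => [/eqP ->|hji]; first lra.
  rewrite Rmat_entry (negbTE hji); exact: h1.
split.
  move=> j; case: (boolP (j == i)) => [/eqP ->|hji]; first lra.
  rewrite [X in X <= _]Rmat_entry (negbTE hji); have := h2 j; lra.
lra.
Qed.

Lemma P2_ne v l : P2 v l -> v l 0 != 1.
Proof. move=> [_ [_ h]]; by rewrite gt_eqF. Qed.

End S.

Lemma fact2 n : (0 < n)%N -> (exists k, n = 2 ^ k)%N \/ (exists p, prime p /\ odd p /\ (p %| n)%N).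
Proof.
elim: n {-2}n (leqnn n) => [|m IH] n hn n0; first by move: hn n0; case: n.
case: (boolP (odd n)) => hodd.
  case: (eqVneq n 1%N) => [->|n1]; first by left; exists 0%N.
  right; have n1' : (1 < n)%N by rewrite ltn_neqAle eq_sym n1 n0.
  exists (pdiv n); split; first exact: pdiv_prime.
  split; last exact: pdiv_dvd.
  apply/negP => /negP; rewrite -dvdn2 => h2.
  have : (2 %| n)%N by apply: dvdn_trans h2 (pdiv_dvd n).
  by rewrite dvdn2 hodd.
have hn2 : n = (n./2).*2 by rewrite -{1}(odd_double_half n) (negbTE hodd).
have h0 : (0 < n./2)%N by move: n0; rewrite {1}hn2 double_gt0.
have hl : (n./2 <= m)%N.
  by move: hn n0; rewrite {1 3}hn2 -addnn; case: (n./2) => // k; lia.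
case: (IH _ hl h0) => [[k hk]|[p [hp [hop hpd]]]].
  by left; exists k.+1; rewrite hn2 hk expnS -mul2n.
right; exists p; split=> //; split=> //; rewrite hn2 -mul2n; exact: dvdn_mull.
Qed.

Lemma reduce (R : realFieldType) d (hd : (2 <= d)%N) (P : 'cV[R]_(d.+2) -> 'I_(d.+2) -> Prop)
  (Pstep : forall v l i, P v l -> i != l -> P (Rmat R i *m v) i)
  (Pne : forall v l, P v l -> v l 0 != 1) (base : P (v1 R d) ord0) t
  (hdist : path (fun a b : 'I_(d.+2) => a != b) ord0 t) j (hj : j \in ord0 :: t) :
  foldl (g R d) (v1 R d) t j 0 != 1.
Proof. have := @gen R d hd P Pstep Pne t _ ord0 hdist base j. rewrite hj. by apply. Qed.

Lemma dm1E (R : realFieldType) d : (1 <= d)%N -> (d%:R - 1 : R) = (d.-1)%:R.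
Proof. move=> h; by rewrite -{1}(prednK h) -natr1 addrK. Qed.

Lemma case_d2 (R : realFieldType) t
  (hdist : path (fun a b : 'I_4 => a != b) ord0 t) j (hj : j \in ord0 :: t) :
  foldl (g R 2) (v1 R 2) t j 0 != 1.
Proof.
have hd : (2 <= 2)%N by [].
have h7 : v1 R 2 ord0 0 = 7.
  rewrite (@v1_0 R 2 hd). have E : (2%:R : R) - 1 = 1 by rewrite -natr1 addrK.
  rewrite E divr1. lra.
apply: (@reduce R 2 hd _ (@P2_step R 2 hd erefl) (@P2_ne R 2)) => //.
split.
  move=> k; case: (eqVneq k ord0) => [->|hk]; first by rewrite h7; lra.
  by rewrite (@v1_j R 2 hd _ hk).
split; last by rewrite h7; lra.
move=> k; case: (eqVneq k ord0) => [->|hk]; first by [].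
by rewrite (@v1_j R 2 hd _ hk) h7; lra.
Qed.

Lemma natzR (R : realFieldType) n : ((n%:Z)%:~R : R) = n%:R.
Proof. by []. Qed.

Lemma case_odd (R : realFieldType) d (hd : (2 <= d)%N) p (hp : prime p) (hop : odd p)
  (hpd : (p %| d.-1)%N) t
  (hdist : path (fun a b : 'I_(d.+2) => a != b) ord0 t) j (hj : j \in ord0 :: t) :
  foldl (g R d) (v1 R d) t j 0 != 1.
Proof.
have hd1 : (1 <= d)%N by apply: ltnW.
have hq : (0 < d.-1)%N by lia.
have hq' : (d.-1)%:R != 0 :> R by rewrite pnatr_eq0 -lt0n.
have ha : ~~ (p%:Z %| 2%:Z)%Z.
  rewrite dvdzE !absz_nat; apply/negP => h.
  have h2 := dvdn_leq (isT : (0 < 2)%N) h; have h1 := prime_gt1 hp.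
  have e : p = 2%N by lia.
  by rewrite e in hop.
have hc1 : 2 / (d%:R - 1) = (2%:Z)%:~R / (d.-1)%:R :> R by rewrite dm1E.
have hc2 : (d%:R + 1) / (d%:R - 1) = (d.+1%:Z)%:~R / (d.-1)%:R :> R
  by rewrite dm1E // natzR -natr1.
apply: (@reduce R d hd _ (@Inv_step R d hd p (d.-1) 2 (d.+1) hp hpd hq ha hc1 hc2) (@Inv_ne R d p)) => //.
exists (d.-1), (fun k => if k == ord0 then (3 * d + 1)%N%:Z else (d.-1)%:Z).
split => //; split => //; split.
  move=> k; case: (eqVneq k ord0) => [->|hk].
    rewrite v1_0 // ?eqxx dm1E // natzR natrD natrM. field. exact: hq'.
  by rewrite v1_j // natzR divff.
split.
  rewrite eqxx dvdzE absz_nat.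
  have -> : (3 * d + 1 = 3 * d.-1 + 4)%N by lia.
  rewrite dvdn_addr ?dvdn_mull //.
  apply/negP => h; have h2 := dvdn_leq (isT : (0 < 4)%N) h; have h1 := prime_gt1 hp.
  have : p = 2%N \/ p = 3%N \/ p = 4%N by lia.
  by case=> [e|[e|e]]; move: hop h hp; rewrite e.
by move=> k hk; rewrite (negbTE hk) dvdzE !absz_nat.
Qed.

Lemma case_pow (R : realFieldType) d (hd : (2 <= d)%N) L (hdk : (d.-1 = 2 ^ L.+3)%N) t
  (hdist : path (fun a b : 'I_(d.+2) => a != b) ord0 t) j (hj : j \in ord0 :: t) :
  foldl (g R d) (v1 R d) t j 0 != 1.
Proof.
have hd1 : (1 <= d)%N by apply: ltnW.
set X : R := (2 ^ L.+1)%N%:R.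
have hX : X != 0 by rewrite /X pnatr_eq0 expn_eq0.
have Dd : d%:R = 4 * X + 1 :> R.
  rewrite -[d%:R](subrK 1) dm1E // hdk /X !expnS !natrM. congr (_ + _). 
  rewrite mulrA; congr (_ * _); lra.
have hq : (0 < 2 ^ L.+2)%N by rewrite expn_gt0.
have hpq : (2 %| 2 ^ L.+2)%N by rewrite expnS dvdn_mulr.
have ha : ~~ ((2%N)%:Z %| 1)%Z by [].
have hq2 : ((2 ^ L.+2)%N%:R : R) = 2 * X by rewrite /X expnS natrM.
have hX3 : (3 * 2 ^ L.+1 + 1)%N%:R = 3 * X + 1 :> R by rewrite natrD natrM.
have Dm : d%:R - 1 = 4 * X :> R by rewrite Dd; ring.
have Dp : d%:R + 1 = 4 * X + 2 :> R by rewrite Dd; ring.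
have hXN : (2 ^ L.+1)%N%:R = X :> R by [].
clearbody X.
have h4 : 4 * X != 0 by rewrite mulf_neq0 // pnatr_eq0.
have h2 : 2 * X != 0 by rewrite mulf_neq0 // pnatr_eq0.
have hc1 : 2 / (d%:R - 1) = 1%:~R / (2 ^ L.+2)%N%:R :> R.
  rewrite hq2 Dm. field. by rewrite hX.
have hc2 : (d%:R + 1) / (d%:R - 1) = ((2 ^ L.+2)%N.+1%:Z)%:~R / (2 ^ L.+2)%N%:R :> R.
  rewrite natzR -natr1 hq2 Dm Dp. field. by rewrite hX.
apply: (@reduce R d hd _ (@Inv_step R d hd 2 _ 1 _ (isT : prime 2) hpq hq ha hc1 hc2) (@Inv_ne R d 2)) => //.
exists (2 ^ L.+1)%N, (fun k => if k == ord0 then (3 * 2 ^ L.+1 + 1)%N%:Z else (2 ^ L.+1)%N%:Z).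
split; first by rewrite expnS dvdn_mulr.
split; first by rewrite expn_gt0.
split.
  move=> k; case: (eqVneq k ord0) => [->|hk].
    rewrite v1_0 // natzR hX3 Dm Dd. rewrite hXN. field. by rewrite hX.
  rewrite v1_j // natzR hXN divff //.
split.
  rewrite eqxx dvdzE absz_nat dvdn_addr //.
  by rewrite expnS mulnCA dvdn_mulr.
by move=> k hk; rewrite (negbTE hk) dvdzE !absz_nat expnS dvdn_mulr.
Qed.

Lemma case5 (R : realFieldType) t
  (hdist : path (fun a b : 'I_7 => a != b) ord0 t) j (hj : j \in ord0 :: t) :
  foldl (g R 5) (v1 R 5) t j 0 != 1.
Proof.
have hd : (2 <= 5)%N by [].
have E4 : (5%:R : R) - 1 = 4 by lra.
have v10 : v1 R 5 ord0 0 = 4.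
  rewrite (@v1_0 R 5 hd) E4. have : (4 : R) != 0 by rewrite pnatr_eq0. move=> h. by field; rewrite ?h.
have n41 : (4 : R) != 1 by rewrite pnatr_eq1.
case: t hdist hj => [|i t] /=.
  by move=> _; rewrite mem_seq1 => /eqP ->; rewrite v10.
case/andP => h0i hp hj.
have hpq : (2 %| 2)%N by [].
have ha : ~~ ((2%N)%:Z %| 1)%Z by [].
have hc1 : 2 / (5%:R - 1) = 1%:~R / 2%:R :> R.
  rewrite E4. have : (2 : R) != 0 by rewrite pnatr_eq0. move=> h. by field; rewrite ?h.
have hc2 : (5%:R + 1) / (5%:R - 1) = (3%:Z)%:~R / 2%:R :> R.
  rewrite E4 natzR. have : (2 : R) != 0 by rewrite pnatr_eq0. move=> h. by field; rewrite ?h.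
have hi0 : i != ord0 by rewrite eq_sym.
have sumv1 : \sum_k v1 R 5 k 0 = 10.
  rewrite big_ord_recl v10 (eq_bigr (fun _ => 1)); last by move=> k _; rewrite (@v1_j R 5 hd).
  rewrite sumr_const card_ord. lra.
have := @gen R 5 hd _ (@Inv_step R 5 hd 2 2 1 3 (isT : prime 2) hpq isT ha hc1 hc2) (@Inv_ne R 5 2) t (Rmat R i *m v1 R 5) i hp.
apply.
  exists 2%N, (fun k => if k == i then 7%:Z else if k == ord0 then 8%:Z else 2%:Z).
  split => //; split => //; split.
    move=> k; rewrite Rmat_entry //; case: (eqVneq k i) => [_|hki].
      rewrite sumv1 (@v1_j R 5 hd _ hi0) E4 natzR.
      have : (2 : R) != 0 by rewrite pnatr_eq0. move=> h. by field; rewrite ?h.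
    case: (eqVneq k ord0) => [->|hk0].
      rewrite v10 natzR. have : (2 : R) != 0 by rewrite pnatr_eq0. move=> h. by field; rewrite ?h.
    rewrite (@v1_j R 5 hd _ hk0) natzR divff // pnatr_eq0 //.
  split; first by rewrite eqxx.
  move=> k hk; rewrite (negbTE hk); by case: (k == ord0).
case: (boolP (j \in i :: t)) => // hjt /=.
move: hj; rewrite in_cons (negbTE hjt) orbF => /eqP ->.
by rewrite Rmat_entry // (negbTE h0i) v10.
Qed.

Theorem lemma4p9 (R : realFieldType) (d : nat) (hd2 : (2 <= d)%N) (hd3 : d != 3%N)
  (t : seq 'I_(d.+2))
  (hdist : path (fun a b : 'I_(d.+2) => a != b) ord0 t) :
  forall i : 'I_(d.+2), i \in ord0 :: t ->
    sigmaw (wvec R d) i (wordmx R (ord0 :: t)) != 1.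
Proof.
move=> j hj; rewrite sigmawE /wordmx /= foldl_mul mulmx1.
change (foldl (g R d) (v1 R d) t j 0 != 1).
case: (eqVneq d 2%N) => [d2|dn2].
  subst d; exact: case_d2.
have hd1 : (0 < d.-1)%N by lia.
case: (@fact2 _ hd1) => [[k hk]|[p [hp [hop hpd]]]]; last exact: (@case_odd R d hd2 p hp hop hpd t hdist j hj).
case: k hk => [|[|[|L]]] hk.
- move/eqP: dn2; lia.
- move/eqP: hd3; lia.
- have d5 : d = 5%N by lia.
  subst d; exact: case5.
- exact: (@case_pow R d hd2 L hk t hdist j hj).
Qed.
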